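(* Let $n\ge3$, $I$ a finite nonempty set, $G=\mathrm{H}_n^{(I)}$ with projections $\pi_i\colon G\to\mathrm{H}_n$, and $H\le G$. If $HM(G)=G$ and $\pi_i(H)=\mathrm{H}_n$ for all $i\in I$, then $H=G$.
   Context: $M(G)$ is the intersection of all maximal normal subgroups of a finite group $G$. $V=\mathbb{F}_2^n$, $\mathrm{H}_n=V\rtimes S_n$ with $S_n$ permuting coordinates; total sign $\chi(x\tau)=(-1)^{\sum_ix_i}$; $\mathrm{H}_n^{(I)}=\{(g_i)_{i\in I}\in\mathrm{H}_n^I:\chi(g_i)=\chi(g_j)\ \forall i,j\in I\}$. *)

(* Defs.v *)
From HB Require Import structures.
From mathcomp Require Import all_boot all_order all_fingroup all_solvable.
Set Implicit Arguments. Unset Strict Implicit. Unset Printing Implicit Defensive.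
Local Open Scope group_scope.

(* Hyperoctahedral group H_n = F_2^n >< S_n realised as the group of signed
   permutations: permutations of 'I_n * bool commuting with the sign flip. *)
Definition flip n (x : 'I_n * bool) : 'I_n * bool := (x.1, ~~ x.2).

Definition Hn (n : nat) : {set {perm ('I_n * bool)}} :=
  [set g : {perm ('I_n * bool)} | [forall x, g (flip x) == flip (g x)]].

(* total sign chi(x tau) = (-1)^(sum_i x_i): parity of the number of
   coordinates whose sign is flipped (true = odd = -1). *)
Definition tsign n (f : 'I_n * bool -> 'I_n * bool) : bool :=
  odd #|[set k : 'I_n | (f (k, false)).2]|.

Definition proj (I : finType) n (i : I) (g : {perm (I * ('I_n * bool))})
  : 'I_n * bool -> 'I_n * bool := fun x => (g (i, x)).2.

(* H_n^(I): tuples (g_i)_{i in I} in H_n^I with all chi(g_i) equal, realised as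
   fibre-preserving permutations of I x ('I_n * bool) (g (i,x) = (i, g_i x)). *)
Definition HnI (I : finType) (n : nat) : {set {perm (I * ('I_n * bool))}} :=
  [set g : {perm (I * ('I_n * bool))} | [forall i, forall x, (g (i, x)).1 == i]
        && [forall i, forall x, proj i g (flip x) == flip (proj i g x)]
        && [forall i, forall j, tsign (proj i g) == tsign (proj j g)]].

Definition piH (I : finType) n (i : I) (H : {set {perm (I * ('I_n * bool))}})
  : {set {perm ('I_n * bool)}} :=
  [set h : {perm ('I_n * bool)} | [exists g in H, [forall x, proj i g x == h x]]].

Definition Mset (gT : finGroupType) (G : {set gT}) : {set gT} :=
  G :&: \bigcap_(N : {group gT} | maxnormal N G G) N.

(* Main.v *)
Require Import Defs.
From HB Require Import structures.
From mathcomp Require Import all_boot all_order all_fingroup all_solvable.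
From mathcomp Require Import zify.
Set Implicit Arguments. Unset Strict Implicit. Unset Printing Implicit Defensive.
Local Open Scope group_scope.


Definition fix_inj (T : finType) (f : T -> T) : T -> T :=
  if injectiveb f then f else id.
Lemma fix_inj_inj (T : finType) (f : T -> T) : injective (fix_inj f).
Proof. by rewrite /fix_inj; case: injectiveP => // _ x y. Qed.
Definition mkperm (T : finType) (f : T -> T) : {perm T} := perm (@fix_inj_inj _ f).
Lemma mkpermE (T : finType) (f : T -> T) : injective f -> mkperm f =1 f.
Proof. by move=> fi x; rewrite permE /fix_inj; case: injectiveP. Qed.

Section Signed.
Variable n : nat.
Local Notation sp := {perm 'I_n * bool}.

Lemma HnP (a : sp) : reflect (forall x, a (flip x) = flip (a x)) (a \in Hn n).
Proof. rewrite inE; apply: (iffP forallP) => H x; first exact/eqP. exact/eqP. Qed.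

Definition sf (a : sp) (k : 'I_n) := (a (k, false)).1.
Definition Sa (a : sp) := [set k | (a (k, false)).2].

Lemma HnE (a : sp) : a \in Hn n -> forall x, a x = (sf a x.1, x.2 (+) (x.1 \in Sa a)).
Proof.
move/HnP=> H [k b]; rewrite /sf inE /=; case: b => /=.
  have -> : ((k, true) : 'I_n * bool) = flip (k, false) by [].
  by rewrite H /flip /=.
by case: (a (k,false)).
Qed.

Lemma sf_inj (a : sp) : a \in Hn n -> injective (sf a).
Proof.
move=> aH k l e; have := HnE aH.
move=> E; have : a (k, (k \in Sa a)) = a (l, (l \in Sa a)).
  by rewrite !E /= e !addbb.
by move/perm_inj => [].
Qed.

Definition spart (a : sp) : {perm 'I_n} := mkperm (sf a).
Lemma spartE (a : sp) : a \in Hn n -> spart a =1 sf a.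
Proof. by move=> aH; apply: mkpermE; apply: sf_inj. Qed.

Lemma Hn_group : group_set (Hn n).
Proof.
apply/group_setP; split; first by apply/HnP=> x; rewrite !perm1.
move=> a b /HnP Ha /HnP Hb; apply/HnP=> x; by rewrite !permM Ha Hb.
Qed.
Canonical Hn_grp := Group Hn_group.

Lemma Hn1 : (1 : sp) \in Hn n. Proof. exact: group1 Hn_grp. Qed.
Lemma HnM a b : a \in Hn n -> b \in Hn n -> a * b \in Hn n.
Proof. exact: (@groupM _ Hn_grp). Qed.
Lemma HnV a : a \in Hn n -> a^-1 \in Hn n.
Proof. exact: (@groupVr _ Hn_grp). Qed.

Lemma spartM a b : a \in Hn n -> b \in Hn n -> spart (a * b) = spart a * spart b.
Proof.
move=> Ha Hb; apply/permP=> k.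
rewrite permM !spartE ?HnM //; rewrite /sf permM (HnE Ha) /=.
by rewrite (HnE Hb).
Qed.

Definition Lf (p : {perm 'I_n}) (x : 'I_n * bool) := (p x.1, x.2).
Lemma Lf_inj p : injective (Lf p).
Proof. by move=> [k b] [l c] [/perm_inj -> ->]. Qed.
Definition L p : sp := perm (@Lf_inj p).
Lemma LE p x : L p x = (p x.1, x.2). Proof. by rewrite permE. Qed.
Lemma LM p q : L (p * q) = L p * L q.
Proof. by apply/permP=> x; rewrite permM !LE permM. Qed.
Lemma L_Hn p : L p \in Hn n.
Proof. by apply/HnP=> x; rewrite !LE. Qed.
Lemma spartL p : spart (L p) = p.
Proof. by apply/permP=> k; rewrite spartE ?L_Hn // /sf LE. Qed.
Lemma SaL p : Sa (L p) = set0.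
Proof. by apply/setP=> k; rewrite !inE LE. Qed.

Definition Flf (S : {set 'I_n}) (x : 'I_n * bool) := (x.1, x.2 (+) (x.1 \in S)).
Lemma Flf_inj S : injective (Flf S).
Proof. move=> [k b] [l c] [/= e]; subst l => /addIb ->. by []. Qed.
Definition Fl S : sp := perm (@Flf_inj S).
Lemma FlE S x : Fl S x = (x.1, x.2 (+) (x.1 \in S)). Proof. by rewrite permE. Qed.
Lemma Fl_Hn S : Fl S \in Hn n.
Proof. by apply/HnP=> x; rewrite !FlE /flip /= addNb. Qed.
Lemma FlM S T : Fl S * Fl T = Fl [set k | (k \in S) (+) (k \in T)].
Proof. by apply/permP=> x; rewrite permM !FlE /= inE addbA. Qed.
Lemma SaFl S : Sa (Fl S) = S.
Proof. by apply/setP=> k; rewrite !inE FlE. Qed.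

Lemma decomp a : a \in Hn n -> a = Fl (Sa a) * L (spart a).
Proof.
move=> Ha; apply/permP=> x; rewrite permM FlE LE spartE // (HnE Ha) /=.
by [].
Qed.

Lemma FlJL S p : Fl S ^ L p = Fl (p @: S).
Proof.
apply/permP=> x; rewrite !permM FlE LE /= FlE /=.
have -> : (L p)^-1 x = ((p^-1) x.1, x.2).
  by apply: (@perm_inj _ (L p)); rewrite permKV LE /= permKV; case: x.
rewrite /= !permKV; congr (_, _); congr (_ (+) _); apply/idP/imsetP => [h|[y yS ->]]; [by exists (p^-1 x.1); rewrite ?permKV | by rewrite permK].
Qed.

Lemma Fl1J a k : a \in Hn n -> Fl [set k] ^ a = Fl [set sf a k].
Proof.
move=> Ha; apply/permP=> z; rewrite !permM.
set w := a^-1 z; have -> : z = a w by rewrite /w permKV.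
rewrite FlE. rewrite (HnE Ha). rewrite FlE. rewrite (HnE Ha) /= !inE.
rewrite (inj_eq (sf_inj Ha)).
by rewrite -!addbA [(_ == k) (+) _]addbC.
Qed.

End Signed.


Lemma tcomm (T : finType) (a b c d : T) : a != c -> a != d -> b != c -> b != d ->
  tperm a b * tperm c d = tperm c d * tperm a b.
Proof.
move=> ac ad bc bd; apply/permP=> x; rewrite !permM.
do ! case: tpermP => //; move=> *; subst => //; try by move: ac ad bc bd; rewrite ?eqxx.
Qed.

Section SymN.
Variable T : finType.
Variable P : {group {perm T}}.
Hypothesis PJ : forall x r, x \in P -> x ^ r \in P.

Definition C3 (x y z : T) := tperm x y * tperm y z.

Lemma C3J x y z r : C3 x y z ^ r = C3 (r x) (r y) (r z).
Proof. by rewrite /C3 conjMg !tpermJ. Qed.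

Lemma move3 (x0 y0 z0 x y z : T) :
  x0 != y0 -> x0 != z0 -> y0 != z0 -> x != y -> x != z -> y != z ->
  exists r : {perm T}, [/\ r x0 = x, r y0 = y & r z0 = z].
Proof.
move=> a1 a2 a3 b1 b2 b3.
pose r1 := tperm x0 x; pose y1 := r1 y0; pose z1 := r1 z0.
pose r2 := tperm y1 y; pose z2 := r2 z1; pose r3 := tperm z2 z.
have xy1 : x != y1 by rewrite /y1 -(tpermL x0 x) (inj_eq perm_inj).
have xz1 : x != z1 by rewrite /z1 -(tpermL x0 x) (inj_eq perm_inj).
have yz1 : y1 != z1 by rewrite /y1 /z1 (inj_eq perm_inj).
have r2x : r2 x = x by rewrite /r2 tpermD // eq_sym.
have r2y1 : r2 y1 = y by rewrite /r2 tpermL.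
have xz2 : x != z2 by rewrite -r2x /z2 (inj_eq perm_inj).
have yz2 : y != z2 by rewrite -r2y1 /z2 (inj_eq perm_inj).
exists (r1 * r2 * r3); split; rewrite !permM.
- by rewrite /r1 tpermL r2x /r3 tpermD // eq_sym.
- by rewrite -/y1 r2y1 /r3 tpermD // eq_sym.
- by rewrite -/z1 -/z2 /r3 tpermL.
Qed.

Lemma C3_all x0 y0 z0 : x0 != y0 -> x0 != z0 -> y0 != z0 -> C3 x0 y0 z0 \in P ->
  forall x y z, x != y -> x != z -> y != z -> C3 x y z \in P.
Proof.
move=> a1 a2 a3 HP x y z b1 b2 b3.
have [r [<- <- <-]] := move3 a1 a2 a3 b1 b2 b3.
by rewrite -C3J PJ.
Qed.

Hypothesis C3P : forall x y z, x != y -> x != z -> y != z -> C3 x y z \in P.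

Lemma T1 (x y : T) : tperm x y * tperm x y = 1.
Proof. by rewrite -{1}(tpermV x y) mulVg. Qed.

Lemma tt_P a b c d : a != b -> c != d -> tperm a b * tperm c d \in P.
Proof.
move=> ab cd.
case: (eqVneq c a) => [ca|ca].
  subst c; case: (eqVneq d b) => [->|db]; first by rewrite T1 group1.
  by rewrite tpermC; apply: C3P; rewrite // eq_sym.
case: (eqVneq c b) => [cb|cb].
  subst c; case: (eqVneq d a) => [->|da]; first by rewrite [tperm b a]tpermC T1 group1.
  by apply: C3P; rewrite // eq_sym.
case: (eqVneq d a) => [da|da].
  by subst d; rewrite tpermC [tperm c a]tpermC; apply: C3P; rewrite // eq_sym.
case: (eqVneq d b) => [db|db].
  by subst d; rewrite [tperm c b]tpermC; apply: C3P; rewrite // eq_sym.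
have -> : tperm a b * tperm c d = C3 a b c * C3 b c d.
  by rewrite /C3 mulgA -[tperm a b * tperm b c * tperm b c]mulgA T1 mulg1.
by rewrite groupM // C3P // eq_sym.
Qed.

Lemma even_prod (ts : seq (T * T)) : all dpair ts -> ~~ odd (size ts) ->
  \prod_(t <- ts) tperm t.1 t.2 \in P.
Proof.
move: {2}(size ts) (leqnn (size ts)) => m; elim: m ts => [|m IH] ts.
  by case: ts => //= _ _ _; rewrite big_nil group1.
case: ts => [|t1 [|t2 ts]] /=; [by rewrite big_nil group1 | by [] | ].
move=> sz /and3P [d1 d2 dts] od.
rewrite !big_cons mulgA groupM //; first exact: tt_P.
apply: IH => //; first by move: sz; rewrite !ltnS; apply: leq_trans.
by rewrite negbK in od.
Qed.

End SymN.

Section SymOdd.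
Variable T : finType.
Variable P : {group {perm T}}.
Hypothesis PJ : forall x r, x \in P -> x ^ r \in P.
Variable s : {perm T}.
Hypothesis sP : s \in P.
Hypothesis sodd : odd_perm s.
Hypothesis T3 : 2 < #|T|.

Lemma key u v : tperm (s u) (s v) * tperm u v \in P.
Proof.
have : s^-1 * s ^ tperm u v \in P by rewrite groupM ?groupV ?PJ.
have -> : s^-1 * s ^ tperm u v = (tperm u v)^-1 ^ s * tperm u v by rewrite !conjgE !mulgA.
by rewrite tpermV tpermJ.
Qed.

Lemma caseA k : s k != k -> s (s k) != k -> C3 (s (s k)) (s k) k \in P.
Proof.
move=> h1 h2; have := key k (s k).
by rewrite /C3 tpermC [tperm k _]tpermC.
Qed.

Lemma exists3 : exists x y z, [/\ x != y, x != z, y != z & C3 x y z \in P].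
Proof.
have [k sk] : exists k, s k != k.
  apply/existsP; apply: contraT; rewrite negb_exists => /forallP h.
  have s1 : s = 1 by apply/permP=> x; rewrite perm1; apply/eqP; move: (h x); rewrite negbK.
  by move: sodd; rewrite s1 odd_perm1.
have inj := @perm_inj _ s.
have ssk : s (s k) != s k by rewrite (inj_eq inj).
case: (eqVneq (s (s k)) k) => [ssk_k|h2]; last first.
  by exists (s (s k)), (s k), k; split; rewrite ?caseA // eq_sym.
have [m mk] : exists m, m \notin [set k; s k].
  apply/existsP; apply: contraT; rewrite negb_exists => /forallP h.
  have : #|T| <= #|[set k; s k]|.
    by apply: subset_leq_card; apply/subsetP=> x _; move: (h x); rewrite negbK.
  by rewrite cards2; case: (_ != _); rewrite // leqNgt (leq_trans _ T3).
move: mk; rewrite !inE negb_or => /andP [mk msk].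
have smk : s m != k by rewrite -ssk_k (inj_eq inj).
have smsk : s m != s k by rewrite (inj_eq inj).
case: (eqVneq (s m) m) => [smm|smm].
  exists (s k), m, k; split; try by [|rewrite eq_sym].
  by have := key k m; rewrite smm /C3 [tperm k m]tpermC.
case: (eqVneq (s (s m)) m) => [ssm|ssm]; last first.
  by exists (s (s m)), (s m), m; split; rewrite ?caseA // ?(inj_eq inj) // eq_sym.
set m' := s m in smk smsk smm ssm *.
have m'k : m' != k by [].
case: (boolP [exists p, p \notin [set k; s k; m; m']]) => [/existsP [p]|].
  rewrite !inE !negb_or => /andP [/andP [/andP [pk psk] pm] pm'].
  have e1 := key k m; rewrite -/m' in e1.
  have e2 : (tperm (s k) m' * tperm k m) ^ tperm m p \in P by apply: PJ.
  rewrite conjMg !tpermJ in e2.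
  have h1 : tperm m p k = k by rewrite tpermD // eq_sym.
  have h2 : tperm m p (s k) = s k by rewrite tpermD // eq_sym.
  have h3 : tperm m p m' = m' by rewrite tpermD // eq_sym.
  rewrite h1 h2 h3 tpermL in e2.
  have := groupM e1 e2.
  have c1 : s k != k by [].
  have c2 : s k != m by rewrite eq_sym.
  have c3 : m' != m by [].
  rewrite -mulgA [tperm k m * _]mulgA -(tcomm c1 c2 m'k c3).
  rewrite !mulgA T1 mul1g.
  by move=> H; exists m, k, p; split; try by [|rewrite eq_sym]; rewrite /C3 tpermC.
move/existsPn => hall.
have eqs : s = tperm k (s k) * tperm m m'.
  apply/permP=> x; rewrite permM; move: (hall x); rewrite negbK !inE.
  have km : k != m by rewrite eq_sym.
  have skm : s k != m by rewrite eq_sym.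
  have km' : k != m' by rewrite eq_sym.
  have skm' : s k != m' by rewrite eq_sym.
  case/orP=> [/orP [/orP [] | ] | ] /eqP ->.
  - by rewrite tpermL tpermD.
  - by rewrite ssk_k tpermR tpermD.
  - by rewrite (tpermD km skm) tpermL.
  - by rewrite /m' ssm (tpermD km' skm') tpermR.
move: sodd; rewrite eqs odd_permM !odd_tperm.
by rewrite eq_sym sk eq_sym smm.
Qed.

Lemma S1 p q : tperm p q \in P.
Proof.
case: (eqVneq p q) => [->|pq]; first by rewrite tperm1 group1.
have [x [y [z [xy xz yz Cxyz]]]] := exists3.
have C3P := C3_all PJ xy xz yz Cxyz.
have [ts e dts] := prod_tpermP s.
have := @even_prod _ P C3P (ts ++ [:: (p, q)]).
rewrite all_cat dts /= pq size_cat /= addn1 /=.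
have od : odd (size ts) by rewrite -(odd_perm_prod dts) -e.
rewrite od => /(_ isT isT).
rewrite big_cat /= big_seq1 -e => h.
by rewrite -(mulKg s (tperm p q)) groupM ?groupV.
Qed.

End SymOdd.


Section NormHn.
Variable n : nat.
Local Notation sp := {perm 'I_n * bool}.
Hypothesis n3 : 2 < n.
Variable N : {group sp}.
Hypothesis NH : N \subset Hn n.
Hypothesis NJ : forall x a, x \in N -> a \in Hn n -> x ^ a \in N.
Hypothesis Nts : forall x, x \in N -> tsign x = false.
Variable a0 : sp.
Hypothesis a0N : a0 \in N.
Hypothesis a0odd : odd_perm (spart a0).

Lemma a0H : a0 \in Hn n. Proof. exact: (subsetP NH). Qed.

Lemma Fl0 : Fl (set0 : {set 'I_n}) = 1.
Proof. by apply/permP=> x; rewrite FlE perm1 inE addbF; case: x. Qed.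

Lemma FlK (S : {set 'I_n}) : Fl S * Fl S = 1.
Proof.
rewrite FlM -Fl0; congr (Fl _); apply/setP=> x; by rewrite !inE addbb.
Qed.

Lemma Fl2M (k l : 'I_n) : k != l -> Fl [set k] * Fl [set l] = Fl [set k; l].
Proof.
move=> kl; rewrite FlM; congr (Fl _); apply/setP=> x; rewrite !inE.
by case: (eqVneq x k) => [->|]; rewrite ?(negPf kl).
Qed.

Lemma W2a : exists k l, k != l /\ Fl [set k; l] \in N.
Proof.
have H0 := a0H.
have [k sk] : exists k, spart a0 k != k.
  apply/existsP; apply: contraT; rewrite negb_exists => /forallP h.
  have s1 : spart a0 = 1.
    by apply/permP=> x; rewrite perm1; apply/eqP; move: (h x); rewrite negbK.
  by move: a0odd; rewrite s1 odd_perm1.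
rewrite spartE // in sk.
exists (sf a0 k), k; split => //.
have : a0^-1 * a0 ^ Fl [set k] \in N by rewrite groupM ?groupV ?NJ ?Fl_Hn.
have -> : a0^-1 * a0 ^ Fl [set k] = (Fl [set k])^-1 ^ a0 * Fl [set k].
  by rewrite !conjgE !mulgA.
have -> : (Fl [set k])^-1 = Fl [set k] by apply/eqP; rewrite eq_invg_mul FlK.
by rewrite Fl1J // Fl2M.
Qed.

Lemma move2 (k l p q : 'I_n) : k != l -> p != q ->
  exists r : {perm 'I_n}, r k = p /\ r l = q.
Proof.
move=> kl pq; pose r1 := tperm k p; pose l1 := r1 l.
have pl1 : p != l1 by rewrite /l1 -(tpermL k p) (inj_eq perm_inj).
exists (r1 * tperm l1 q); rewrite !permM; split.
  by rewrite /r1 tpermL tpermD // eq_sym.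
by rewrite -/l1 tpermL.
Qed.

Lemma W2 (p q : 'I_n) : p != q -> Fl [set p; q] \in N.
Proof.
move=> pq; have [k [l [kl HN]]] := W2a.
have [r [rk rl]] := move2 kl pq.
have := NJ HN (L_Hn r); rewrite FlJL.
by rewrite imsetU1 imset_set1 rk rl.
Qed.

Lemma Fl_even (S : {set 'I_n}) : ~~ odd #|S| -> Fl S \in N.
Proof.
move: {2}#|S| (leqnn #|S|) => m; elim: m S => [|m IH] S.
  by rewrite leqn0 cards_eq0 => /eqP -> _; rewrite Fl0 group1.
move=> Sm ev.
case: (set_0Vmem S) => [->|[p pS]]; first by rewrite Fl0 group1.
have : #|S :\ p| > 0.
  move: ev; rewrite (cardsD1 p S) pS /=.
  by case: #|S :\ p|.
case/card_gt0P=> q; rewrite !inE => /andP [qp qS].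
have -> : S = [set p; q] :|: (S :\: [set p; q]).
  apply/setP=> x; rewrite !inE; case: (eqVneq x p) => [->|xp]; first by rewrite pS.
  by case: (eqVneq x q) => [->|xq]; rewrite ?qS ?orbT.
set R := S :\: _.
have -> : Fl ([set p; q] :|: R) = Fl [set p; q] * Fl R.
  rewrite FlM; congr (Fl _); apply/setP=> x; rewrite !inE.
  case: (eqVneq x p) => [->|xp] //=; by case: (eqVneq x q).
have pqS : [set p; q] \subset S by apply/subsetP=> x; rewrite !inE => /orP [] /eqP ->.
have cR : #|R| = #|S| - 2.
  rewrite /R cardsD (setIidPr pqS) cards2 eq_sym qp //.
have c2 : 2 <= #|S| by move: (subset_leq_card pqS); rewrite cards2 eq_sym qp.
rewrite groupM ?W2 1?eq_sym //; apply: IH.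
  by rewrite cR; lia.
by rewrite cR oddB // (negPf ev).
Qed.

Lemma L1 : L (1 : {perm 'I_n}) = 1.
Proof. by apply/permP=> x; rewrite LE !perm1; case: x. Qed.

Lemma LV (r : {perm 'I_n}) : L r^-1 = (L r)^-1.
Proof. by apply/eqP; rewrite eq_sym eq_invg_mul -LM mulgV L1. Qed.

Lemma LJ (r s : {perm 'I_n}) : L (r ^ s) = L r ^ L s.
Proof. by rewrite !conjgE !LM LV. Qed.

Lemma La0 : L (spart a0) \in N.
Proof.
have e := decomp a0H.
have hF : Fl (Sa a0) \in N by apply: Fl_even; rewrite -[odd _]/(tsign a0) Nts.
have -> : L (spart a0) = (Fl (Sa a0))^-1 * a0.
  by apply: (mulgI (Fl (Sa a0))); rewrite mulgA mulgV mul1g -e.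
by rewrite groupM ?groupV.
Qed.

Definition Lpre := [set r : {perm 'I_n} | L r \in N].
Lemma Lpre_group : group_set Lpre.
Proof.
apply/group_setP; split; first by rewrite inE L1 group1.
by move=> x y; rewrite !inE LM; apply: groupM.
Qed.
Canonical Lpre_grp := Group Lpre_group.

Lemma Lall (r : {perm 'I_n}) : L r \in N.
Proof.
have PJ : forall x s, x \in Lpre_grp -> x ^ s \in Lpre_grp.
  by move=> x s; rewrite !inE LJ => h; apply: NJ => //; apply: L_Hn.
have sP : spart a0 \in Lpre_grp by rewrite inE La0.
have T3 : 2 < #|'I_n| by rewrite card_ord.
have tP := S1 PJ sP a0odd T3.
have [ts -> _] := prod_tpermP r.
have : \prod_(t <- ts) tperm t.1 t.2 \in Lpre_grp.
  by apply: group_prod => t _; apply: tP.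
by rewrite inE.
Qed.

Lemma Dn_in_N d : d \in Hn n -> tsign d = false -> d \in N.
Proof.
move=> dH ts; rewrite (decomp dH) groupM ?Lall //.
by apply: Fl_even; rewrite -[odd _]/(tsign d) ts.
Qed.

End NormHn.


Lemma odd_card_xor (T : finType) (A B : {set T}) :
  odd #|[set x | (x \in A) (+) (x \in B)]| = odd #|A| (+) odd #|B|.
Proof.
have -> : [set x | (x \in A) (+) (x \in B)] = (A :\: B) :|: (B :\: A).
  by apply/setP=> x; rewrite !inE; case: (x \in A); case: (x \in B).
rewrite cardsU.
have -> : (A :\: B) :&: (B :\: A) = set0.
  by apply/setP=> x; rewrite !inE; case: (x \in A); case: (x \in B).
rewrite cards0 subn0 !cardsD oddD !oddB ?subset_leq_card ?subsetIl ?subsetIr //.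
by rewrite setIC; case: (odd _); case: (odd _); case: (odd _).
Qed.

Section TS.
Variable n : nat.
Local Notation sp := {perm 'I_n * bool}.

Lemma tsign_ext (f g : 'I_n * bool -> 'I_n * bool) : f =1 g -> tsign f = tsign g.
Proof. by move=> e; rewrite /tsign; congr (odd _); apply: eq_card => k; rewrite !inE e. Qed.

Lemma tsignE (a : sp) : tsign a = odd #|Sa a|.
Proof. by []. Qed.

Lemma tsignM (a b : sp) : a \in Hn n -> b \in Hn n ->
  tsign (a * b) = tsign a (+) tsign b.
Proof.
move=> Ha Hb; rewrite !tsignE.
have -> : Sa (a * b) = [set k | (k \in Sa a) (+) (k \in spart a @^-1: Sa b)].
  apply/setP=> k; rewrite !inE permM (HnE Ha) /= (HnE Hb) /= spartE //.
  by rewrite /Sa !inE.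
by rewrite odd_card_xor card_preimset //; apply: perm_inj.
Qed.

Lemma tsign1 : tsign (1 : sp) = false.
Proof.
rewrite tsignE (_ : Sa 1 = set0) ?cards0 //.
by apply/setP=> k; rewrite !inE perm1.
Qed.

Lemma tsignV (a : sp) : a \in Hn n -> tsign a^-1 = tsign a.
Proof.
move=> Ha; have := tsignM (HnV Ha) Ha; rewrite mulVg tsign1.
by case: (tsign a); case: (tsign a^-1).
Qed.

Lemma oddsM (a b : sp) : a \in Hn n -> b \in Hn n ->
  odd_perm (spart (a * b)) = odd_perm (spart a) (+) odd_perm (spart b).
Proof. by move=> Ha Hb; rewrite spartM // odd_permM. Qed.

End TS.


Section GI.
Variable I : finType.
Variable n : nat.
Local Notation gp := {perm I * ('I_n * bool)}.
Local Notation sp := {perm 'I_n * bool}.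

Definition fibre (g : gp) := [forall i, forall x, (g (i, x)).1 == i].

Lemma fibreE (g : gp) i x : fibre g -> g (i, x) = (i, proj i g x).
Proof.
move/forallP/(_ i)/forallP/(_ x)/eqP; rewrite /proj.
by case: (g (i, x)) => /= a b ->.
Qed.

Lemma proj_inj (g : gp) i : fibre g -> injective (proj i g).
Proof.
move=> fg x y e; have : g (i, x) = g (i, y) by rewrite !fibreE // e.
by move/perm_inj => [].
Qed.

Definition projp i (g : gp) : sp := mkperm (proj i g).
Lemma projpE (g : gp) i : fibre g -> projp i g =1 proj i g.
Proof. by move=> fg; apply: mkpermE; apply: proj_inj. Qed.

Lemma fibre1 : fibre 1.
Proof. by apply/forallP=> i; apply/forallP=> x; rewrite perm1. Qed.

Lemma fibreM (g h : gp) : fibre g -> fibre h -> fibre (g * h).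
Proof.
move=> fg fh; apply/forallP=> i; apply/forallP=> x.
by rewrite permM fibreE // fibreE.
Qed.

Lemma fibreV (g : gp) : fibre g -> fibre g^-1.
Proof.
move=> fg; apply/forallP=> i; apply/forallP=> x.
set y := g^-1 (i, x).
have : g y = (i, x) by rewrite /y permKV.
by case: y => j z; rewrite fibreE // => -[->].
Qed.

Lemma projpM (g h : gp) i : fibre g -> fibre h ->
  projp i (g * h) = projp i g * projp i h.
Proof.
move=> fg fh; apply/permP=> x; rewrite permM !projpE ?fibreM //.
by rewrite /proj permM fibreE.
Qed.

Lemma projp1 i : projp i 1 = 1.
Proof. by apply/permP=> x; rewrite projpE ?fibre1 // /proj !perm1. Qed.

Lemma projpV (g : gp) i : fibre g -> projp i g^-1 = (projp i g)^-1.
Proof.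
move=> fg; apply/eqP; rewrite eq_sym eq_invg_mul -projpM ?fibreV //.
by rewrite mulgV projp1.
Qed.

Lemma projpJ (g h : gp) i : fibre g -> fibre h ->
  projp i (g ^ h) = projp i g ^ projp i h.
Proof.
move=> fg fh; rewrite !conjgE !projpM ?fibreM ?fibreV // projpV //.
Qed.

Lemma fibre_eq (g h : gp) : fibre g -> fibre h ->
  (forall i, projp i g = projp i h) -> g = h.
Proof.
move=> fg fh e; apply/permP=> [[i x]]; rewrite !fibreE //.
by rewrite -!projpE // e.
Qed.

Lemma HnIP (g : gp) : reflect
  [/\ fibre g, forall i, projp i g \in Hn n &
      forall i j, tsign (projp i g) = tsign (projp j g)] (g \in HnI I n).
Proof.
rewrite inE; apply: (iffP idP).
  case/andP=> /andP [fg /forallP fl] /forallP ts; split => //.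
    move=> i; apply/HnP=> x; rewrite !projpE //.
    by apply/eqP; move/forallP: (fl i); apply.
  move=> i j; rewrite !(tsign_ext (projpE _ fg)).
  by apply/eqP; move/forallP: (ts i); apply.
case=> fg fl ts; apply/andP; split; first (apply/andP; split => //).
  apply/forallP=> i; apply/forallP=> x.
  by have /HnP := fl i => /(_ x); rewrite !projpE // => ->.
apply/forallP=> i; apply/forallP=> j.
by have := ts i j; rewrite !(tsign_ext (projpE _ fg)) => ->.
Qed.

Lemma HnI_group : group_set (HnI I n).
Proof.
apply/group_setP; split.
  apply/HnIP; split; first exact: fibre1.
    by move=> i; rewrite projp1 Hn1.
  by move=> i j; rewrite !projp1.
move=> g h /HnIP [fg Hg tg] /HnIP [fh Hh th]; apply/HnIP; split.
- exact: fibreM.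
- by move=> i; rewrite projpM //; apply: HnM; [apply: Hg | apply: Hh].
- by move=> i j; rewrite !projpM // !tsignM ?Hg ?Hh // (tg i j) (th i j).
Qed.
Canonical HnI_grp := Group HnI_group.

Lemma HnI_fibre g : g \in HnI I n -> fibre g.
Proof. by case/HnIP. Qed.
Lemma HnI_Hn g i : g \in HnI I n -> projp i g \in Hn n.
Proof. by case/HnIP=> _ h _; apply: h. Qed.
Lemma HnI_ts g i j : g \in HnI I n -> tsign (projp i g) = tsign (projp j g).
Proof. by case/HnIP=> _ _ h; apply: h. Qed.

Definition locf (i : I) (a : sp) (u : I * ('I_n * bool)) :=
  if u.1 == i then (u.1, a u.2) else u.
Lemma locf_inj i a : injective (locf i a).
Proof.
move=> [j x] [k y]; rewrite /locf /=.
case: (eqVneq j i) => [->|ji]; case: (eqVneq k i) => [->|ki] //=.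
- by case=> /perm_inj ->.
- by case=> e; move: ki; rewrite -e eqxx.
- by case=> e; move: ji; rewrite e eqxx.
Qed.
Definition loc i a : gp := perm (@locf_inj i a).

Lemma loc_fibre i a : fibre (loc i a).
Proof.
apply/forallP=> j; apply/forallP=> x; rewrite permE /locf /=; by case: (j == i).
Qed.

Lemma projp_loc i a j : projp j (loc i a) = if j == i then a else 1.
Proof.
apply/permP=> x; rewrite projpE ?loc_fibre // /proj permE /locf /=.
by case: eqP => _ //; rewrite perm1.
Qed.

Lemma loc_HnI i a : a \in Hn n -> tsign a = false -> loc i a \in HnI I n.
Proof.
move=> Ha ta; apply/HnIP; split; first exact: loc_fibre.
  by move=> j; rewrite projp_loc; case: eqP => _ //; rewrite Hn1.
by move=> j k; rewrite !projp_loc; do 2 case: eqP => _; rewrite ?ta ?tsign1.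
Qed.

End GI.


Section Main.
Variable n : nat.
Variable I : finType.
Local Notation gp := {perm I * ('I_n * bool)}.
Local Notation sp := {perm 'I_n * bool}.
Variable H : {group gp}.
Hypothesis n3 : 2 < n.
Hypothesis HG : H \subset HnI I n.
Hypothesis HM : H * Mset (HnI I n) = HnI I n.
Hypothesis piHH : forall i : I, piH i H = Hn n.

Local Notation G := (HnI_grp I n).

Lemma HinG (h : gp) : h \in H -> h \in G. Proof. exact: (subsetP HG). Qed.
Lemma Hfib (h : gp) : h \in H -> fibre h. Proof. by move/HinG/HnI_fibre. Qed.

Lemma piH_surj (i : I) (a : sp) : a \in Hn n -> exists2 h, h \in H & projp i h = a.
Proof.
rewrite -(piHH i) inE => /exists_inP [h hH /forallP e]; exists h => //.
by apply/permP=> x; rewrite projpE ?Hfib //; apply/eqP.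
Qed.

Definition agree (J : {set I}) (h g : gp) := [forall j in J, projp j h == projp j g].
Definition Claim (J : {set I}) := forall g, g \in G -> exists2 h, h \in H & agree J h g.

Lemma agreeP (J : {set I}) (h g : gp) : reflect (forall j, j \in J -> projp j h = projp j g) (agree J h g).
Proof.
apply: (iffP forall_inP) => e j jJ; first by apply/eqP; apply: e.
by apply/eqP; apply: e.
Qed.

Lemma agreeM (J : {set I}) (h1 g1 h2 g2 : gp) : h1 \in G -> h2 \in G -> g1 \in G -> g2 \in G ->
  agree J h1 g1 -> agree J h2 g2 -> agree J (h1 * h2) (g1 * g2).
Proof.
move=> a b c d /agreeP e1 /agreeP e2; apply/agreeP=> j jJ.
by rewrite !projpM ?HnI_fibre // e1 ?e2.
Qed.

Lemma agreeV (J : {set I}) (h g : gp) : h \in G -> g \in G -> agree J h g -> agree J h^-1 g^-1.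
Proof.
move=> a b /agreeP e; apply/agreeP=> j jJ.
by rewrite !projpV ?HnI_fibre // e.
Qed.

Lemma agree_refl (J : {set I}) (g : gp) : agree J g g.
Proof. by apply/agreeP. Qed.

Section Par.
Variable i : I.
Definition par (x : gp) := odd_perm (spart (projp i x)).
Lemma parM (x y : gp) : x \in G -> y \in G -> par (x * y) = par x (+) par y.
Proof.
by move=> xG yG; rewrite /par projpM ?HnI_fibre // oddsM // HnI_Hn.
Qed.
Lemma spart1 : spart (1 : sp) = 1.
Proof. by apply/permP=> k; rewrite spartE ?Hn1 // /sf !perm1. Qed.
Lemma par1 : par 1 = false.
Proof. by rewrite /par projp1 spart1 odd_perm1. Qed.
Lemma parV (x : gp) : x \in G -> par x^-1 = par x.
Proof.
move=> xG; have := parM (groupVr xG) xG; rewrite mulVg par1.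
by case: (par x); case: (par x^-1).
Qed.
Lemma parJ (x y : gp) : x \in G -> y \in G -> par (x ^ y) = par x.
Proof.
move=> xG yG; rewrite conjgE !parM ?groupM ?groupV // parV //.
by case: (par x); case: (par y).
Qed.
End Par.

Section Step.
Variables (J : {set I}) (i : I).
Hypothesis iJ : i \notin J.
Hypothesis CJ : Claim J.

Definition Bset := [set b in H | agree J b 1].

Lemma k01 : exists k0 k1 : 'I_n, k0 != k1.
Proof.
have h0 : 0 < n by apply: leq_trans n3.
have h1 : 1 < n by apply: leq_trans n3.
by exists (Ordinal h0), (Ordinal h1).
Qed.

Lemma oddB : exists2 b, b \in Bset & par i b.
Proof.
case: (boolP [exists b in Bset, par i b]) => [/exists_inP [b ? ?]|]; first by exists b.
move/exists_inPn => nb; exfalso.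
have wd : forall g h h', g \in G -> h \in H -> h' \in H ->
    agree J h g -> agree J h' g -> par i h = par i h'.
  move=> g h h' gG hH h'H a1 a2.
  have hG := HinG hH; have h'G := HinG h'H.
  have : h^-1 * h' \in Bset.
    rewrite inE groupM ?groupV //=.
    rewrite -(mulVg g); apply: agreeM => //; rewrite ?groupV //.
    exact: agreeV.
  move/nb; rewrite parM ?groupV // parV //.
  by case: (par i h); case: (par i h').
pose K := [set g in G | [exists h in H, agree J h g && (par i h == par i g)]].
have Kchar : forall g h, g \in G -> h \in H -> agree J h g ->
    (g \in K) = (par i h == par i g).
  move=> g h gG hH a; rewrite inE gG /=; apply/exists_inP/idP.
    by case=> h' h'H /andP [a' /eqP <-]; rewrite (wd g h h').
  by move=> e; exists h => //; rewrite a e.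
have KG : K \subset G by apply/subsetP=> g; rewrite inE => /andP [].
have Kgrp : group_set K.
  apply/group_setP; split.
    by rewrite (Kchar 1 1) ?group1 ?agree_refl.
  move=> x y xK yK.
  have xG : x \in G := subsetP KG x xK.
  have yG : y \in G := subsetP KG y yK.
  have [hx hxH ax] := CJ xG; have [hy hyH ay] := CJ yG.
  have hxG := HinG hxH; have hyG := HinG hyH.
  rewrite (Kchar x hx) // in xK; rewrite (Kchar y hy) // in yK.
  rewrite (Kchar (x * y) (hx * hy)) ?groupM ?agreeM //.
  by rewrite !parM // (eqP xK) (eqP yK).
pose Kg := Group Kgrp.
have KJ : forall x g, x \in G -> g \in K -> g ^ x \in K.
  move=> x g xG gK; have gG : g \in G := subsetP KG g gK.
  have [hx hxH ax] := CJ xG; have [hg hgH ag] := CJ gG.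
  have hxG := HinG hxH; have hgG := HinG hgH.
  rewrite (Kchar g hg) // in gK.
  rewrite (Kchar (g ^ x) (hg ^ hx)) ?groupJ //.
    by rewrite !parJ.
  apply/agreeP=> j jJ; rewrite !projpJ ?HnI_fibre //.
  by move/agreeP: ax => /(_ j jJ) ->; move/agreeP: ag => /(_ j jJ) ->.
have nKG : G \subset 'N(Kg).
  apply/normsP=> x xG; apply/eqP; rewrite eqEcard cardJg leqnn andbT.
  apply/subsetP=> z; rewrite mem_conjg => zK.
  by rewrite -(conjgKV x z) KJ.
have [k0 [k1 k01']] := k01.
pose t := loc i (L (tperm k0 k1)).
have tG : t \in G by apply: loc_HnI; rewrite ?L_Hn // tsignE SaL cards0.
have tK : t \notin K.
  rewrite inE tG /=; apply/exists_inP=> [[h hH /andP [a e]]].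
  have : h \in Bset.
    rewrite inE hH /=; apply/agreeP=> j jJ; move/agreeP: a => ->//.
    rewrite projp_loc projp1; case: eqP => // ji; by move: jJ iJ; rewrite ji => ->.
  move/nb; rewrite (eqP e) /par projp_loc eqxx spartL odd_tperm k01'.
  by [].
have pK : Kg \proper G by rewrite properE KG /=; apply/subsetPn; exists t.
have mK : maxnormal Kg G G.
  apply/maxgroupP; split; first by rewrite pK nKG.
  move=> X /andP [pX nX] KX; apply/eqP; rewrite eq_sym eqEsubset KX /=.
  have XG : X \subset G by apply: proper_sub.
  apply/subsetP=> y yX; apply: contraTT pX => yK.
  have yG : y \in G := subsetP XG y yX.
  rewrite properE negb_and negbK XG /=; apply/subsetP=> g gG.
  case: (boolP (g \in K)) => gK; first exact: (subsetP KX).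
  have [hy hyH ay] := CJ yG; have [hg hgH ag] := CJ gG.
  have hyG := HinG hyH; have hgG := HinG hgH.
  rewrite (Kchar y hy) // in yK; rewrite (Kchar g hg) // in gK.
  have : g * y^-1 \in K.
    rewrite (Kchar (g * y^-1) (hg * hy^-1)) ?groupM ?groupV //.
      rewrite !parM ?groupV // !parV //.
      by move: yK gK; case: (par i hg); case: (par i hy); case: (par i g); case: (par i y).
    by apply: agreeM; rewrite ?groupV //; apply: agreeV.
  move/(subsetP KX) => h; by rewrite -(mulgKV y g) groupM.
have MK : Mset (HnI I n) \subset K.
  rewrite /Mset; apply: subset_trans (subsetIr _ _) _.
  exact: (@bigcap_inf _ _ Kg (fun N : {group gp} => maxnormal N (HnI I n) (HnI I n)) (fun N : {group gp} => gval N) mK).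
have HK : H \subset K.
  by apply/subsetP=> h hH; rewrite (Kchar h h) ?(HinG hH) ?agree_refl.
have : HnI I n \subset K by rewrite -HM; apply: (@mul_subG _ Kg).
by move/subsetP/(_ t tG); rewrite (negPf tK).
Qed.

Lemma step_ne (j0 : I) : j0 \in J -> Claim (i |: J).
Proof.
move=> j0J.
have [b0 b0B b0odd] := oddB.
have BH : forall b, b \in Bset -> b \in H by move=> b; rewrite inE => /andP [].
have BG : forall b, b \in Bset -> b \in G by move=> b /BH/HinG.
have B1 : forall b j, b \in Bset -> j \in J -> projp j b = 1.
  move=> b j; rewrite inE => /andP [_ /agreeP a] jJ; by rewrite a // projp1.
pose N := [set projp i b | b in Bset].
have Ngrp : group_set N.
  apply/group_setP; split.
    apply/imsetP; exists 1; last by rewrite projp1.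
    by rewrite inE group1 agree_refl.
  move=> x y /imsetP [b1 b1B ->] /imsetP [b2 b2B ->].
  apply/imsetP; exists (b1 * b2); last by rewrite projpM ?HnI_fibre ?BG.
  rewrite inE groupM ?BH //= -(mulg1 1) agreeM ?group1 ?BG //.
    by rewrite inE in b1B; case/andP: b1B.
  by rewrite inE in b2B; case/andP: b2B.
pose Ng := Group Ngrp.
have NH : Ng \subset Hn n.
  by apply/subsetP=> x /imsetP [b bB ->]; apply: HnI_Hn; apply: BG.
have NJ : forall x a, x \in Ng -> a \in Hn n -> x ^ a \in Ng.
  move=> x a /imsetP [b bB ->] aH.
  have [h hH <-] := piH_surj i aH.
  have hG := HinG hH.
  have bG := BG b bB.
  apply/imsetP; exists (b ^ h); last by rewrite projpJ // HnI_fibre.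
  rewrite inE groupJ ?(BH b bB) //=; apply/agreeP=> j jJ.
  by rewrite projpJ // ?HnI_fibre // B1 // conj1g projp1.
have Nts : forall x, x \in Ng -> tsign x = false.
  move=> x /imsetP [b bB ->].
  by rewrite (HnI_ts i j0 (BG b bB)) B1 // tsign1.
have b0N : projp i b0 \in Ng by apply/imsetP; exists b0.
move=> g gG.
have [h hH a] := CJ gG.
have hG := HinG hH.
pose d := (projp i h)^-1 * projp i g.
have dH : d \in Hn n by apply: HnM; [apply: HnV|]; apply: HnI_Hn.
have dts : tsign d = false.
  rewrite tsignM ?HnV ?HnI_Hn // tsignV ?HnI_Hn //.
  rewrite (HnI_ts i j0 hG) (HnI_ts i j0 gG).
  by move/agreeP: a => -> //; rewrite addbb.
have := Dn_in_N n3 NH NJ Nts b0N b0odd dH dts.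
case/imsetP=> b bB eb.
exists (h * b); first exact: groupM hH (BH b bB).
apply/agreeP=> j; rewrite !inE => /orP [/eqP ->|jJ].
  by rewrite projpM ?HnI_fibre // ?BG // -eb /d mulKVg.
rewrite projpM ?HnI_fibre // ?BG // (B1 _ _ bB jJ) mulg1.
by move/agreeP: a => ->.
Qed.

End Step.

Lemma step (J : {set I}) (i : I) : i \notin J -> Claim J -> Claim (i |: J).
Proof.
move=> iJ CJ.
case: (set_0Vmem J) => [->|[j0 j0J]]; last exact: (step_ne iJ CJ j0J).
move=> g gG.
have [h hH e] := piH_surj i (HnI_Hn i gG).
exists h => //; apply/agreeP=> j; rewrite setU0 inE => /eqP ->; exact: e.
Qed.

Lemma claim_all (J : {set I}) : Claim J.
Proof.
move: {2}#|J| (leqnn #|J|) => m; elim: m J => [|m IH] J.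
  rewrite leqn0 cards_eq0 => /eqP -> g gG; exists 1; rewrite ?group1 //.
  by apply/agreeP=> j; rewrite inE.
move=> Jm.
case: (set_0Vmem J) => [->|[i iJ]].
  move=> g gG; exists 1; rewrite ?group1 //.
  by apply/agreeP=> j; rewrite inE.
have -> : J = i |: (J :\ i) by rewrite setD1K.
apply: step; first by rewrite !inE eqxx.
apply: IH; move: Jm; rewrite (cardsD1 i J) iJ add1n ltnS => //.
Qed.

Lemma main_eq : H :=: HnI I n.
Proof.
apply/eqP; rewrite eqEsubset HG /=; apply/subsetP=> g gG.
have [h hH /agreeP a] := claim_all [set: I] gG.
suff -> : g = h by [].
apply: fibre_eq; [exact: HnI_fibre | exact: Hfib |].
by move=> j; rewrite a ?inE.
Qed.

End Main.


Theorem mainTheorem16 (n : nat) (I : finType)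
  (H : {group {perm (I * ('I_n * bool))}}) :
  2 < n -> 0 < #|I| ->
  H \subset HnI I n ->
  H * Mset (HnI I n) = HnI I n ->
  (forall i : I, piH i H = Hn n) ->
  H :=: HnI I n.
Proof.
move=> n3 _ HG HM piHH.
exact: (@main_eq n I H n3 HG HM piHH).
Qed.
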